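(* Let $\tau,K\ge1$ and $C\ge1$. Let $\lambda_i,\lambda_j,\lambda_k,\lambda_\ell\in\mathbb{H}$ with $\lambda_i\neq\lambda_j$, $\lambda_k\neq\lambda_\ell$ and $\{\lambda_i,\lambda_j\}\neq\{\lambda_k,\lambda_\ell\}$, and let $A_i,A_j,A_k,A_\ell\subset\mathbb{H}$ be finite sets such that each $X\in\{A_i,A_j,A_k,A_\ell\}$ satisfies $|X|\le C\tau$ and $E^+(X)\le C\tau^3/K$. Then \[ \big|\big((A_i+A_j)\times(A_i\lambda_i+A_j\lambda_j)\big)\cap\big((A_k+A_\ell)\times(A_k\lambda_k+A_\ell\lambda_\ell)\big)\big| \ll C\,\tau^2K^{-1/2}, \] where $(X+Y)\times(X\lambda+Y\mu)$ denotes the set of points $\{(a+b,\ a\lambda+b\mu): a\in X, b\in Y\}\subset\mathbb{H}^2$.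
   Context: $\mathbb{H}$ denotes the quaternions. For finite $X\subset\mathbb{H}$, $E^+(X)=|\{(a,b,c,d)\in X^4: a-b=c-d\}|$ is the additive energy. $X\lambda=\{x\lambda:x\in X\}$. $\ll$ hides an absolute constant. *)

(* Defs.v *)
From Stdlib Require Import Reals List.
Import ListNotations.
Open Scope R_scope.

Record quat : Type := mkQ { q0 : R; q1 : R; q2 : R; q3 : R }.

Definition qadd (x y : quat) : quat :=
  mkQ (q0 x + q0 y) (q1 x + q1 y) (q2 x + q2 y) (q3 x + q3 y).

Definition qsub (x y : quat) : quat :=
  mkQ (q0 x - q0 y) (q1 x - q1 y) (q2 x - q2 y) (q3 x - q3 y).

Definition qmul (x y : quat) : quat :=
  mkQ (q0 x * q0 y - q1 x * q1 y - q2 x * q2 y - q3 x * q3 y)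
      (q0 x * q1 y + q1 x * q0 y + q2 x * q3 y - q3 x * q2 y)
      (q0 x * q2 y - q1 x * q3 y + q2 x * q0 y + q3 x * q1 y)
      (q0 x * q3 y + q1 x * q2 y - q2 x * q1 y + q3 x * q0 y).

Definition quat_eq_dec (x y : quat) : {x = y} + {x <> y}.
Proof. decide equality; apply Req_EM_T. Defined.

(* A finite set X of quaternions is represented by a duplicate-free list;
   |X| = length X. *)

Definition energy (X : list quat) : nat :=
  length (filter
    (fun p : quat * quat * quat * quat =>
       let '(a, b, c, d) := p in
       if quat_eq_dec (qsub a b) (qsub c d) then true else false)
    (list_prod (list_prod (list_prod X X) X) X)).

Definition in_pts (X Y : list quat) (lam mu : quat) (p : quat * quat) : Prop :=
  exists a b, In a X /\ In b Y /\
    p = (qadd a b, qadd (qmul a lam) (qmul b mu)).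

Definition good_set (C tau K : R) (X : list quat) : Prop :=
  NoDup X /\ INR (length X) <= C * tau /\ INR (energy X) <= C * tau ^ 3 / K.

(* Main.v *)
Require Import Defs.
From Stdlib Require Import Reals List Lra Lia Psatz.
Import ListNotations.
Open Scope R_scope.

Fixpoint rsum {T} (f : T -> R) (l : list T) : R :=
  match l with nil => 0 | x :: l' => f x + rsum f l' end.

Lemma rsum_ext {T} (f g : T -> R) l :
  (forall x, In x l -> f x = g x) -> rsum f l = rsum g l.
Proof. induction l; simpl; intros H; auto. rewrite H, IHl; auto. Qed.

Lemma rsum_le {T} (f g : T -> R) l :
  (forall x, In x l -> f x <= g x) -> rsum f l <= rsum g l.
Proof. induction l; simpl; intros H. lra. specialize (IHl (fun x h => H x (or_intror h))).
  specialize (H a (or_introl eq_refl)). lra. Qed.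

Lemma rsum_nonneg {T} (f : T -> R) l :
  (forall x, In x l -> 0 <= f x) -> 0 <= rsum f l.
Proof. induction l; simpl; intros H. lra. specialize (IHl (fun x h => H x (or_intror h))).
  specialize (H a (or_introl eq_refl)). lra. Qed.

Lemma rsum_plus {T} (f g : T -> R) l :
  rsum (fun x => f x + g x) l = rsum f l + rsum g l.
Proof. induction l; simpl; lra. Qed.

Lemma rsum_mult_l {T} (f : T -> R) c l :
  rsum (fun x => c * f x) l = c * rsum f l.
Proof. induction l; simpl; lra. Qed.

Lemma rsum_const {T} c (l : list T) : rsum (fun _ => c) l = c * INR (length l).
Proof. induction l; simpl length; rewrite ?S_INR; simpl; lra. Qed.

Lemma rsum_swap {T U} (f : T -> U -> R) l1 l2 :
  rsum (fun x => rsum (fun y => f x y) l2) l1 = rsum (fun y => rsum (fun x => f x y) l1) l2.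
Proof. induction l1; simpl. induction l2; simpl; lra.
  rewrite IHl1, <- rsum_plus. reflexivity. Qed.

Lemma rsum_app {T} (f : T -> R) l1 l2 : rsum f (l1 ++ l2) = rsum f l1 + rsum f l2.
Proof. induction l1; simpl; lra. Qed.

Lemma rsum_map {T U} (f : U -> R) (g : T -> U) l : rsum f (map g l) = rsum (fun x => f (g x)) l.
Proof. induction l; simpl; lra. Qed.

Lemma rsum_prod {T U} (f : T * U -> R) l1 l2 :
  rsum f (list_prod l1 l2) = rsum (fun x => rsum (fun y => f (x, y)) l2) l1.
Proof. induction l1; simpl. lra. rewrite rsum_app, rsum_map, IHl1. reflexivity. Qed.

Lemma rsum_in_ge {T} (f : T -> R) l z :
  (forall y, In y l -> 0 <= f y) -> In z l -> f z <= rsum f l.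
Proof. induction l; simpl; intros H Hx. contradiction.
  assert (0 <= rsum f l) by (apply rsum_nonneg; auto).
  destruct Hx as [<-|Hx]. specialize (H a (or_introl eq_refl)). lra.
  specialize (IHl (fun y h => H y (or_intror h)) Hx). specialize (H a (or_introl eq_refl)). lra. Qed.

Lemma filter_len {T} (p : T -> bool) l :
  INR (length (filter p l)) = rsum (fun x => if p x then 1 else 0) l.
Proof. induction l; simpl. reflexivity. destruct (p a); simpl length; rewrite ?S_INR; lra. Qed.

Definition indic {T} (dec : forall x y : T, {x = y} + {x <> y}) (x y : T) : R :=
  if dec x y then 1 else 0.

Lemma ind_01 {T} dec (x y : T) : 0 <= indic dec x y <= 1.
Proof. unfold indic; destruct dec; lra. Qed.

Lemma ind_sym {T} dec (x y : T) : indic dec x y = indic dec y x.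
Proof. unfold indic; destruct (dec x y), (dec y x); congruence. Qed.

Lemma ind_iff {T U} dec dec' (x y : T) (x' y' : U) :
  (x = y <-> x' = y') -> indic dec x y = indic dec' x' y'.
Proof. unfold indic; intros H; destruct (dec x y), (dec' x' y'); tauto. Qed.

Lemma ind_subst {T} dec (x y : T) (F : T -> R) : indic dec x y * F y = indic dec x y * F x.
Proof. unfold indic; destruct (dec x y); subst; lra. Qed.

Lemma nodup_ind {T U} dec (k : T -> U) (w : U) l :
  (forall x y, k x = k y -> x = y) -> NoDup l ->
  rsum (fun x => indic dec w (k x)) l <= 1.
Proof. intros Hk Hl. induction Hl; simpl. lra.
  unfold indic at 1. destruct (dec w (k x)).
  - rewrite (rsum_ext _ (fun _ => 0)). rewrite rsum_const; lra.
    intros y Hy. unfold indic. destruct (dec w (k y)); auto.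
    exfalso. apply H. rewrite (Hk x y) ; congruence.
  - lra. Qed.

Lemma quat_eq (x y : quat) : q0 x = q0 y -> q1 x = q1 y -> q2 x = q2 y -> q3 x = q3 y -> x = y.
Proof. destruct x, y; simpl; intros; subst; reflexivity. Qed.

Definition qnorm2 (w : quat) := q0 w * q0 w + q1 w * q1 w + q2 w * q2 w + q3 w * q3 w.
Definition qinv (w : quat) : quat :=
  mkQ (q0 w / qnorm2 w) (- q1 w / qnorm2 w) (- q2 w / qnorm2 w) (- q3 w / qnorm2 w).
Definition qz := mkQ 0 0 0 0.

Lemma qnorm2_nz w : w <> qz -> qnorm2 w <> 0.
Proof. intros H Hn. apply H. unfold qnorm2 in Hn. destruct w as [a b c d]; simpl in *.
  assert (a = 0) by nra. assert (b = 0) by nra. assert (c = 0) by nra. assert (d = 0) by nra.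
  subst; reflexivity. Qed.

Lemma qmul_inv_r c w : w <> qz -> qmul (qmul c w) (qinv w) = c.
Proof. intros H. pose proof (qnorm2_nz w H) as Hn. unfold qnorm2 in Hn.
  destruct c as [a b e f], w as [p q r s]; simpl in *.
  unfold qinv, qnorm2; apply quat_eq; simpl; field; exact Hn. Qed.

Lemma qmul_inj w : w <> qz -> forall x y, qmul x w = qmul y w -> x = y.
Proof. intros H x y E. rewrite <- (qmul_inv_r x w H), <- (qmul_inv_r y w H), E. reflexivity. Qed.

Lemma qsub_nz x y : x <> y -> qsub x y <> qz.
Proof. intros H E. apply H. destruct x, y; unfold qsub, qz in E; simpl in *. injection E; intros.
  apply quat_eq; simpl; lra. Qed.

Lemma add_eq_iff a b c d : qadd a b = qadd c d <-> qsub a c = qsub d b.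
Proof. split; intros E; destruct a,b,c,d; unfold qadd,qsub in *; injection E; intros; apply quat_eq; simpl; lra. Qed.

Lemma sub_mul a b u : qsub (qmul a u) (qmul b u) = qmul (qsub a b) u.
Proof. destruct a,b,u; apply quat_eq; simpl; ring. Qed.

Lemma rel_l a b c d li lj lk ll :
  qadd a b = qadd c d -> qadd (qmul a li) (qmul b lj) = qadd (qmul c lk) (qmul d ll) ->
  qadd (qmul a (qsub li ll)) (qmul b (qsub lj ll)) = qmul c (qsub lk ll).
Proof. intros E1 E2.
  assert (H1 : qadd (qmul a (qsub li ll)) (qmul b (qsub lj ll)) =
     qsub (qadd (qmul a li) (qmul b lj)) (qmul (qadd a b) ll)).
  { destruct a,b,li,lj,ll; apply quat_eq; simpl; ring. }
  assert (H2 : qmul c (qsub lk ll) = qsub (qadd (qmul c lk) (qmul d ll)) (qmul (qadd c d) ll)).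
  { destruct c,d,lk,ll; apply quat_eq; simpl; ring. }
  rewrite H1, H2, E1, E2. reflexivity. Qed.

Notation dq := (indic quat_eq_dec).

Lemma amgm_div x y : 1 <= x -> 1 <= y -> 1 <= (x / y + y / x) / 2.
Proof. intros Hx Hy.
  assert (E : (x / y + y / x) / 2 - 1 = (x - y) * (x - y) / (2 * x * y)) by (field; lra).
  assert (0 <= (x - y) * (x - y) / (2 * x * y)).
  { unfold Rdiv; apply Rmult_le_pos. apply Rle_0_sqr. left. apply Rinv_0_lt_compat. nra. }
  lra. Qed.

Lemma divmul_le x y : 0 <= x -> 0 <= y -> x / y * y <= x.
Proof. intros Hx Hy. destruct (Req_dec y 0) as [->|H]. rewrite Rmult_0_r; lra.
  right; field; auto. Qed.

Lemma pair_bound {X Y} (Ps : list X) (Qs : list Y) (h : X -> quat) (g : Y -> quat) :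
  rsum (fun p => rsum (fun q => dq (h p) (g q)) Qs) Ps <=
  (rsum (fun p => rsum (fun p' => dq (h p) (h p')) Ps) Ps +
   rsum (fun q => rsum (fun q' => dq (g q) (g q')) Qs) Qs) / 2.
Proof.
  set (rP := fun d => rsum (fun p' => dq d (h p')) Ps).
  set (rQ := fun d => rsum (fun q' => dq d (g q')) Qs).
  assert (rPge : forall p, In p Ps -> 1 <= rP (h p)).
  { intros p Hp. unfold rP. eapply Rle_trans; [|apply (rsum_in_ge (fun p' => dq (h p) (h p')) Ps p)].
    unfold indic; destruct quat_eq_dec; [lra|congruence]. intros; apply ind_01. exact Hp. }
  assert (rQge : forall q, In q Qs -> 1 <= rQ (g q)).
  { intros q Hq. unfold rQ. eapply Rle_trans; [|apply (rsum_in_ge (fun q' => dq (g q) (g q')) Qs q)].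
    unfold indic; destruct quat_eq_dec; [lra|congruence]. intros; apply ind_01. exact Hq. }
  assert (rPnn : forall d, 0 <= rP d) by (intros; apply rsum_nonneg; intros; apply ind_01).
  assert (rQnn : forall d, 0 <= rQ d) by (intros; apply rsum_nonneg; intros; apply ind_01).
  apply Rle_trans with
    (rsum (fun p => rsum (fun q => / 2 * (rP (h p) / rQ (h p) * dq (h p) (g q)) +
                                  / 2 * (rQ (g q) / rP (g q) * dq (h p) (g q))) Qs) Ps).
  { apply rsum_le; intros p Hp; apply rsum_le; intros q Hq.
    unfold indic at 1 2 3. destruct quat_eq_dec as [E|E]; [|lra].
    pose proof (amgm_div _ _ (rPge p Hp) (rQge q Hq)). rewrite E. rewrite E in H.
    set (a := rP (g q) / rQ (g q)) in *. set (b := rQ (g q) / rP (g q)) in *. lra. }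
  rewrite (rsum_ext _ (fun p => / 2 * (rP (h p) / rQ (h p) * rsum (fun q => dq (h p) (g q)) Qs) +
     / 2 * rsum (fun q => rQ (g q) / rP (g q) * dq (h p) (g q)) Qs)).
  2:{ intros p _. rewrite rsum_plus. f_equal; rewrite <- !rsum_mult_l; apply rsum_ext; intros; ring. }
  rewrite rsum_plus, !rsum_mult_l, rsum_swap.
  rewrite (rsum_ext (fun q => rsum (fun x => rQ (g q) / rP (g q) * dq (h x) (g q)) Ps)
            (fun q => rQ (g q) / rP (g q) * rP (g q))).
  2:{ intros q _. unfold rP at 3. rewrite <- rsum_mult_l. apply rsum_ext; intros; rewrite ind_sym; reflexivity. }
  assert (A1 : rsum (fun p => rP (h p) / rQ (h p) * rsum (fun q => dq (h p) (g q)) Qs) Ps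
               <= rsum (fun p => rsum (fun p' => dq (h p) (h p')) Ps) Ps).
  { apply rsum_le; intros p _. apply (divmul_le (rP (h p)) (rQ (h p))); auto. }
  assert (A2 : rsum (fun q => rQ (g q) / rP (g q) * rP (g q)) Qs
               <= rsum (fun q => rsum (fun q' => dq (g q) (g q')) Qs) Qs).
  { apply rsum_le; intros q _. apply (divmul_le (rQ (g q)) (rP (g q))); auto. }
  lra.
Qed.

Definition E4 (X : list quat) : R :=
  rsum (fun a => rsum (fun b => rsum (fun c => rsum (fun d => dq (qsub a b) (qsub c d)) X) X) X) X.

Lemma energy_E4 X : INR (energy X) = E4 X.
Proof. unfold energy. rewrite filter_len, !rsum_prod. unfold E4.
  apply rsum_ext; intros a _; apply rsum_ext; intros b _; apply rsum_ext; intros c _;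
  apply rsum_ext; intros d _. unfold indic. destruct quat_eq_dec; reflexivity. Qed.

Lemma E4_scale X u : u <> qz ->
  rsum (fun p => rsum (fun p' => dq (qsub (qmul (fst p) u) (qmul (snd p) u))
                                   (qsub (qmul (fst p') u) (qmul (snd p') u))) (list_prod X X)) (list_prod X X)
  = E4 X.
Proof. intros Hu. rewrite rsum_prod. unfold E4. apply rsum_ext; intros a _; apply rsum_ext; intros b _.
  rewrite rsum_prod. apply rsum_ext; intros c _; apply rsum_ext; intros d _. simpl.
  apply ind_iff. rewrite !sub_mul. split; intros E. apply (qmul_inj u Hu); auto. rewrite E; auto. Qed.

Lemma step4 A B u v : u <> qz -> v <> qz ->
  rsum (fun a' => rsum (fun b' => rsum (fun a => rsum (fun b =>
     dq (qadd (qmul a u) (qmul b v)) (qadd (qmul a' u) (qmul b' v))) B) A) B) A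
  <= (E4 A + E4 B) / 2.
Proof. intros Hu Hv.
  rewrite <- (E4_scale A u Hu), <- (E4_scale B v Hv).
  eapply Rle_trans; [|apply (pair_bound (list_prod A A) (list_prod B B)
     (fun p => qsub (qmul (fst p) u) (qmul (snd p) u))
     (fun q => qsub (qmul (fst q) v) (qmul (snd q) v)))].
  right. rewrite rsum_prod.
  rewrite (rsum_ext (fun a' => rsum (fun b' => rsum (fun a => rsum (fun b =>
     dq (qadd (qmul a u) (qmul b v)) (qadd (qmul a' u) (qmul b' v))) B) A) B)
     (fun a' => rsum (fun a => rsum (fun b' => rsum (fun b =>
     dq (qadd (qmul a u) (qmul b v)) (qadd (qmul a' u) (qmul b' v))) B) B) A)).
  2:{ intros; apply rsum_swap. }
  rewrite rsum_swap. apply rsum_ext; intros a _; apply rsum_ext; intros a' _.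
  rewrite rsum_prod. apply rsum_ext; intros b' _; apply rsum_ext; intros b _. simpl.
  apply ind_iff. apply add_eq_iff. Qed.

Definition TT A B C u v w : R :=
  rsum (fun a => rsum (fun b => rsum (fun c => dq (qadd (qmul a u) (qmul b v)) (qmul c w)) C) B) A.

Lemma amgm_t s t : 0 < t -> s <= t / 2 * (s * s) + / (2 * t).
Proof. intros Ht.
  assert (E : t / 2 * (s * s) + / (2 * t) - s = (t * s - 1) * (t * s - 1) / (2 * t)) by (field; lra).
  assert (0 <= (t * s - 1) * (t * s - 1) / (2 * t)).
  { unfold Rdiv; apply Rmult_le_pos. apply Rle_0_sqr. left. apply Rinv_0_lt_compat. lra. }
  lra. Qed.

Lemma core A B C u v w t : u <> qz -> v <> qz -> w <> qz -> NoDup C -> 0 < t ->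
  TT A B C u v w <= t / 2 * ((E4 A + E4 B) / 2) + INR (length C) / (2 * t).
Proof. intros Hu Hv Hw HC Ht.
  set (S' := fun z => rsum (fun a => rsum (fun b => dq (qadd (qmul a u) (qmul b v)) z) B) A).
  assert (T1 : TT A B C u v w = rsum (fun c => S' (qmul c w)) C).
  { unfold TT, S'. rewrite (rsum_ext _ (fun a => rsum (fun c => rsum (fun b =>
       dq (qadd (qmul a u) (qmul b v)) (qmul c w)) B) C)).
    apply rsum_swap. intros; apply rsum_swap. }
  assert (S'nn : forall z, 0 <= S' z).
  { intros; apply rsum_nonneg; intros; apply rsum_nonneg; intros; apply ind_01. }
  assert (T2 : rsum (fun c => S' (qmul c w) * S' (qmul c w)) C <=
     rsum (fun a' => rsum (fun b' => S' (qadd (qmul a' u) (qmul b' v))) B) A).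
  { rewrite (rsum_ext _ (fun c => rsum (fun a' => rsum (fun b' =>
        S' (qadd (qmul a' u) (qmul b' v)) * dq (qadd (qmul a' u) (qmul b' v)) (qmul c w)) B) A)).
    2:{ intros c _. unfold S' at 2. rewrite <- rsum_mult_l. apply rsum_ext; intros a _.
        rewrite <- rsum_mult_l. apply rsum_ext; intros b _.
        rewrite Rmult_comm, ind_subst. apply Rmult_comm. }
    rewrite rsum_swap. apply rsum_le; intros a' _.
    rewrite rsum_swap. apply rsum_le; intros b' _.
    rewrite rsum_mult_l. rewrite <- (Rmult_1_r (S' _)) at 2. apply Rmult_le_compat_l; auto.
    apply nodup_ind; auto. intros; apply (qmul_inj w Hw); auto. }
  assert (T3 : rsum (fun a' => rsum (fun b' => S' (qadd (qmul a' u) (qmul b' v))) B) A <= (E4 A + E4 B) / 2).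
  { apply step4; auto. }
  rewrite T1. eapply Rle_trans.
  { apply rsum_le. intros c _. apply (amgm_t (S' (qmul c w)) t Ht). }
  rewrite rsum_plus, rsum_mult_l, rsum_const.
  assert (0 < t / 2) by lra.
  assert (t / 2 * rsum (fun c => S' (qmul c w) * S' (qmul c w)) C <= t / 2 * ((E4 A + E4 B) / 2)).
  { apply Rmult_le_compat_l; lra. }
  unfold Rdiv at 3. rewrite Rmult_comm. lra.
Qed.

Definition pdec : forall x y : quat * quat, {x = y} + {x <> y}.
Proof. decide equality; apply quat_eq_dec. Defined.

Lemma L_bound A B C u v w (F : quat -> quat -> quat * quat) (L : list (quat * quat)) :
  NoDup L ->
  (forall p, In p L -> exists a b c, In a A /\ In b B /\ In c C /\
       qadd (qmul a u) (qmul b v) = qmul c w /\ p = F a b) ->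
  INR (length L) <= TT A B C u v w.
Proof. intros HL HW.
  replace (INR (length L)) with (rsum (fun _ => 1) L) by (rewrite rsum_const; ring).
  eapply Rle_trans with (rsum (fun p => rsum (fun a => rsum (fun b => rsum (fun c =>
      dq (qadd (qmul a u) (qmul b v)) (qmul c w) * indic pdec (F a b) p) C) B) A) L).
  { apply rsum_le; intros p Hp. destruct (HW p Hp) as (a & b & c & Ha & Hb & Hc & E & Ep).
    assert (nn : forall a b c, 0 <= dq (qadd (qmul a u) (qmul b v)) (qmul c w) * indic pdec (F a b) p).
    { intros; apply Rmult_le_pos; apply ind_01. }
    eapply Rle_trans; [|apply (rsum_in_ge _ _ a); auto].
    2:{ intros; apply rsum_nonneg; intros; apply rsum_nonneg; auto. }
    eapply Rle_trans; [|apply (rsum_in_ge _ _ b); auto].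
    2:{ intros; apply rsum_nonneg; auto. }
    eapply Rle_trans; [|apply (rsum_in_ge _ _ c); auto].
    unfold indic. destruct quat_eq_dec; [|congruence]. destruct pdec; [lra|congruence]. }
  rewrite rsum_swap. unfold TT. apply rsum_le; intros a _.
  rewrite rsum_swap. apply rsum_le; intros b _.
  rewrite rsum_swap. apply rsum_le; intros c _.
  rewrite rsum_mult_l. rewrite <- (Rmult_1_r (dq _ _)) at 2. apply Rmult_le_compat_l. apply ind_01.
  apply (nodup_ind pdec (fun x => x)); auto.
Qed.

Lemma final_arith C tau K EA EB n : 1 <= tau -> 1 <= K -> 1 <= C ->
  EA <= C * tau ^ 3 / K -> EB <= C * tau ^ 3 / K -> n <= C * tau ->
  sqrt K / tau / 2 * ((EA + EB) / 2) + n / (2 * (sqrt K / tau)) <= 1 * C * tau ^ 2 / sqrt K.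
Proof. intros Ht HK HC HA HB Hn.
  assert (Hs : 0 < sqrt K) by (apply sqrt_lt_R0; lra).
  pose proof (sqrt_sqrt K ltac:(lra)) as EK.
  set (s := sqrt K) in *. rewrite <- EK in HA, HB.
  assert (H1 : (EA + EB) / 2 <= C * tau ^ 3 / (s * s)) by lra.
  assert (H2 : s / tau / 2 * ((EA + EB) / 2) <= s / tau / 2 * (C * tau ^ 3 / (s * s))).
  { apply Rmult_le_compat_l; auto. unfold Rdiv. apply Rmult_le_pos; [|lra].
    apply Rmult_le_pos; [lra|]. left; apply Rinv_0_lt_compat; lra. }
  assert (H3 : n / (2 * (s / tau)) <= C * tau / (2 * (s / tau))).
  { unfold Rdiv at 1 3. apply Rmult_le_compat_r; auto. left; apply Rinv_0_lt_compat.
    unfold Rdiv. apply Rmult_lt_0_compat; [lra|]. apply Rmult_lt_0_compat; auto.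
    apply Rinv_0_lt_compat; lra. }
  assert (E1 : s / tau / 2 * (C * tau ^ 3 / (s * s)) = C * tau ^ 2 / (2 * s)) by (field; lra).
  assert (E2 : C * tau / (2 * (s / tau)) = C * tau ^ 2 / (2 * s)) by (field; lra).
  assert (E3 : 1 * C * tau ^ 2 / s = C * tau ^ 2 / (2 * s) + C * tau ^ 2 / (2 * s)) by (field; lra).
  rewrite E3. rewrite E1 in H2. rewrite E2 in H3. lra.
Qed.

Lemma qadd_comm a b : qadd a b = qadd b a.
Proof. destruct a, b; apply quat_eq; simpl; ring. Qed.

Lemma good_bounds C tau K X : good_set C tau K X ->
  NoDup X /\ INR (length X) <= C * tau /\ E4 X <= C * tau ^ 3 / K.
Proof. intros (H1 & H2 & H3). rewrite <- energy_E4. auto. Qed.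

Theorem lemma4p1 :
  exists c : R, 0 < c /\
  forall (tau K C : R) (li lj lk ll : quat) (Ai Aj Ak Al : list quat),
    1 <= tau -> 1 <= K -> 1 <= C ->
    li <> lj -> lk <> ll ->
    ~ ((li = lk /\ lj = ll) \/ (li = ll /\ lj = lk)) ->
    good_set C tau K Ai -> good_set C tau K Aj ->
    good_set C tau K Ak -> good_set C tau K Al ->
    forall L : list (quat * quat),
      NoDup L ->
      (forall p, In p L -> in_pts Ai Aj li lj p /\ in_pts Ak Al lk ll p) ->
      INR (length L) <= c * C * tau ^ 2 / sqrt K.
Proof.
  exists 1. split; [lra|].
  intros tau K C li lj lk ll Ai Aj Ak Al Ht HK HC Hij Hkl Hpair Gi Gj Gk Gl L HL HLp.
  apply good_bounds in Gi, Gj, Gk, Gl.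
  destruct Gi as (_ & _ & Ei), Gj as (_ & _ & Ej), Gk as (Nk & Lk & Ek), Gl as (Nl & Ll & El).
  assert (Ht0 : 0 < sqrt K / tau).
  { unfold Rdiv; apply Rmult_lt_0_compat. apply sqrt_lt_R0; lra. apply Rinv_0_lt_compat; lra. }
  set (F := fun a b => (qadd a b, qadd (qmul a li) (qmul b lj))).
  destruct (quat_eq_dec li ll) as [Eil|Nil]; [|destruct (quat_eq_dec lj ll) as [Ejl|Njl]].
  3:{
    eapply Rle_trans.
    { apply (L_bound Ai Aj Ak (qsub li ll) (qsub lj ll) (qsub lk ll) F L HL).
      intros p Hp. destruct (HLp p Hp) as [(a & b & Ha & Hb & Ep) (c & d & Hc & Hd & Ep')].
      exists a, b, c. repeat split; auto.
      rewrite Ep in Ep'. pose proof (f_equal fst Ep') as E1; pose proof (f_equal snd Ep') as E2; simpl in E1, E2. apply (rel_l a b c d); auto. }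
    eapply Rle_trans. apply (core Ai Aj Ak _ _ _ (sqrt K / tau)); auto using qsub_nz.
    apply final_arith; auto. }
  all: eapply Rle_trans;
    [ apply (L_bound Ai Aj Al (qsub li lk) (qsub lj lk) (qsub ll lk) F L HL);
      intros p Hp; destruct (HLp p Hp) as [(a & b & Ha & Hb & Ep) (c & d & Hc & Hd & Ep')];
      exists a, b, d; repeat split; auto;
      rewrite Ep in Ep'; pose proof (f_equal fst Ep') as E1; pose proof (f_equal snd Ep') as E2; simpl in E1, E2; apply (rel_l a b d c);
        [rewrite E1; apply qadd_comm | rewrite E2; apply qadd_comm]
    | eapply Rle_trans;
      [ apply (core Ai Aj Al _ _ _ (sqrt K / tau)); auto; apply qsub_nz;
        intro; subst; tauto
      | apply final_arith; auto ] ].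
Qed.
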